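(* Let $a\ge 0$ and $i\ge 1$ be integers, and for $j\in\{1,\dots,2i\}$ define $f_a(i,j)=\frac{(a+1)(a+2)\cdots(a+2i)}{a+j}$. Then $$v_2\Big(\sum_{j=1}^{2i}f_a(i,j)\Big)\ge\begin{cases} i-1, & \text{if } 1\le i\le 3,\\ i, & \text{otherwise.}\end{cases}$$
   Context: $v_2$ denotes the $2$-adic valuation. *)

(* Defs.v *)
From mathcomp Require Import all_boot.
Set Implicit Arguments. Unset Strict Implicit. Unset Printing Implicit Defensive.

(* f_a(i,j) = ((a+1)(a+2)...(a+2i)) / (a+j); the division is exact for 1 <= j <= 2i. *)
Definition fa (a i j : nat) : nat :=
  (\prod_(1 <= k < (2 * i).+1) (a + k)) %/ (a + j).

Definition v2 (n : nat) : nat := logn 2 n.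

(* Main.v *)
Require Import Defs.
From mathcomp Require Import all_boot.
From mathcomp Require Import zify ring.

Fixpoint E (s : seq nat) : nat :=
  if s is x :: s' then \prod_(y <- s') y + x * E s' else 0.

Fixpoint G (a i : nat) : seq nat :=
  if i is i'.+1 then (a.+1 * (a + 2 * i' + 2)) :: G a.+1 i' else [::].

Lemma size_G a i : size (G a i) = i.
Proof. by elim: i a => //= i IH a; rewrite IH. Qed.

Lemma E_rcons s y : E (rcons s y) = \prod_(x <- s) x + y * E s.
Proof.
elim: s => [|x s IH] /=; first by rewrite big_nil muln0.
rewrite IH -cats1 big_cat /= big_cons big_cons big_nil; rewrite ?muln1.
rewrite !mulnDr !mulnA; lia.
Qed.

Lemma E_cons x s : E (x :: s) = \prod_(y <- s) y + x * E s.
Proof. by []. Qed.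

Lemma sum_link (f : nat -> nat) (r : seq nat) :
  all (fun j => 0 < f j) r ->
  \sum_(j <- r) (\prod_(k <- r) f k) %/ f j = E (map f r).
Proof.
elim: r => [|x r IH] /=; first by rewrite big_nil.
move=> /andP [fx Hr].
rewrite big_cons big_cons mulKn // big_map.
congr (_ + _).
rewrite -IH // big_distrr /=.
rewrite big_seq_cond [in RHS]big_seq_cond.
apply: eq_bigr => j /andP [jr _].
rewrite muln_divA //.
by rewrite (big_rem j jr) /= dvdn_mulr.
Qed.

Lemma iotaSr m n : iota m n.+1 = rcons (iota m n) (m + n).
Proof. by rewrite -addn1 iotaD cats1. Qed.

Lemma pairing i a :
  E (iota a.+1 (2 * i)) = (2 * a + 2 * i + 1) * E (G a i) /\
  \prod_(x <- iota a.+1 (2 * i)) x = \prod_(x <- G a i) x.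
Proof.
elim: i a => [|i IH] a; first by rewrite muln0 /= big_nil muln0.
have -> : iota a.+1 (2 * i.+1) = a.+1 :: rcons (iota a.+2 (2 * i)) (a + 2 * i + 2).
  rewrite mulnS.
  have -> : iota a.+1 (2*i).+2 = a.+1 :: iota a.+2 (2*i).+1 by [].
  rewrite iotaSr; congr (_ :: rcons _ _); lia.
have [IH1 IH2] := IH a.+1.
simpl G.
rewrite E_cons E_rcons IH1 big_cons -cats1 big_cat /= big_cons big_nil IH2 muln1.
rewrite [in X in _ /\ X]big_cons; split; last lia.
set P := \prod_(x <- G a.+1 i) x; set Q := E (G a.+1 i).
have -> : 2 * a.+1 + 2 * i + 1 = 2 * a + 2 * i.+1 + 1 by lia.
set c := 2 * a + 2 * i.+1 + 1.
rewrite /c; ring.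
Qed.

Lemma prod_even s : all (fun x => 2 %| x) s -> 2 ^ size s %| \prod_(x <- s) x.
Proof.
elim: s => [|x s IH] /=; first by rewrite big_nil.
by move=> /andP [hx hs]; rewrite big_cons expnS dvdn_mul // IH.
Qed.

Lemma prod_even4 s : all (fun x => 2 %| x) s -> has (fun x => 4 %| x) s ->
  2 ^ (size s).+1 %| \prod_(x <- s) x.
Proof.
elim: s => [|x s IH] //= /andP [hx hs] /orP [h4|hh]; rewrite big_cons.
  by rewrite expnS expnS mulnA dvdn_mul // prod_even.
by rewrite expnS dvdn_mul // IH.
Qed.

Lemma E_even s : all (fun x => 2 %| x) s -> 2 ^ (size s).-1 %| E s.
Proof.
elim: s => [|x s IH] //= /andP [hx hs].
case: s IH hs => [|y s] IH hs; first by rewrite /= big_nil.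
rewrite dvdn_add //; first exact: prod_even.
by rewrite /= expnS dvdn_mul // IH.
Qed.

Lemma E_even4 s : all (fun x => 2 %| x) s -> 1 < count (fun x => 4 %| x) s ->
  2 ^ size s %| E s.
Proof.
elim: s => [|x s IH] //= /andP [hx hs].
case h4: (4 %| x) => /= hc.
  have hh : has (fun x => 4 %| x) s by rewrite has_count.
  rewrite dvdn_add //; first exact: prod_even4.
  case: s hh hs {IH hc} => [|y s] //= _ hs.
  rewrite expnS expnS mulnA dvdn_mul //.
  have := E_even (y :: s); rewrite /=; apply; exact: hs.
have hh : has (fun x => 4 %| x) s by rewrite has_count; lia.
rewrite dvdn_add //; first exact: prod_even4.
by rewrite expnS dvdn_mul // IH.
Qed.

Lemma G_even a i : all (fun x => 2 %| x) (G a i).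
Proof.
elim: i a => [|i IH] a //=; rewrite IH andbT.
rewrite dvdn2 !oddM !oddD /=.
by case: (odd a); case: (odd i).
Qed.

Lemma nth_G a i l : l < i -> nth 0 (G a i) l = (a + l.+1) * (a + 2 * i - l).
Proof.
elim: i a l => [|i IH] a [|l] //= hl.
  by congr (_ * _); lia.
rewrite IH //; congr (_ * _); lia.
Qed.

Lemma count2 (P : pred nat) s l1 l2 : l1 < l2 -> l2 < size s ->
  P (nth 0 s l1) -> P (nth 0 s l2) -> 1 < count P s.
Proof.
elim: s l1 l2 => [|x s IH] [|l1] [|l2] //= h12 hs h1 h2.
  have : has P s by apply/hasP; exists (nth 0 s l2) => //; apply: mem_nth.
  rewrite has_count h1 /=; lia.
have := IH l1 l2 h12 hs h1 h2; lia.
Qed.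

Lemma G_count a i : 3 < i -> 1 < count (fun x => 4 %| x) (G a i).
Proof.
move=> hi.
set lA := 3 - a %% 4; set lB := (a + 2 * i) %% 4.
have hA : 4 %| nth 0 (G a i) lA.
  rewrite nth_G; last by rewrite /lA; lia.
  apply: dvdn_mulr; rewrite /lA; lia.
have hB : 4 %| nth 0 (G a i) lB.
  rewrite nth_G; last by rewrite /lB; lia.
  apply: dvdn_mull; rewrite /lB; lia.
have hsz : size (G a i) = i by rewrite size_G.
have : lA != lB by rewrite /lA /lB; lia.
case: (ltngtP lA lB) => // h _.
  apply: (@count2 (fun x => 4 %| x) _ _ _ h) => //; rewrite hsz /lB; lia.
apply: (@count2 (fun x => 4 %| x) _ _ _ h) => //; rewrite hsz /lA; lia.
Qed.

Lemma E_gt0 s : all (fun x => 0 < x) s -> s != [::] -> 0 < E s.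
Proof.
case: s => [|x s] //= /andP [_ hs] _.
have : 0 < \prod_(y <- s) y.
  elim: s hs => [|y s IH] /=; first by rewrite big_nil.
  by move=> /andP [hy hs]; rewrite big_cons muln_gt0 hy IH.
lia.
Qed.

Theorem lemma4p3 (a i : nat) (hi : 1 <= i) :
  (if i <= 3 then i - 1 else i) <= v2 (\sum_(1 <= j < (2 * i).+1) fa a i j).
Proof.
rewrite /fa /v2 (@sum_link (addn a)); last first.
  by apply/allP => x; rewrite mem_index_iota; lia.
have -> : [seq a + x | x <- index_iota 1 (2 * i).+1] = iota a.+1 (2 * i).
  by rewrite /index_iota subn1 /= -iotaDl addn1.
have hpos : 0 < E (iota a.+1 (2 * i)).
  apply: E_gt0; first by apply/allP => x; rewrite mem_iota; lia.
  by case: i hi.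
have [hE _] := pairing i a.
rewrite -pfactor_dvdn // hE dvdn_mull //.
case: ifP => h3.
  by have := @E_even _ (G_even a i); rewrite size_G subn1.
have := @E_even4 _ (G_even a i) (G_count a i _); rewrite size_G; apply; lia.
Qed.
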